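(* Consider the FlexPD-F iterates described in the context with $\beta>0$, integer $T\ge1$ and $U=I-\alpha B$. Let $0<\eta_1<2m$. If $0<\alpha<\frac{1}{L^2/\eta_1+\rho(B)}$ and $0<\beta<\frac{2m-\eta_1}{\rho(A'A)}$, then there exists $\delta_F>0$ such that for all $k\ge0$, \[\|x^{k+1,T}-x^*\|_U^2+\frac{\alpha}{\beta}\|\lambda^{k+1}-\lambda^*\|^2\le\frac{1}{1+\delta_F}\Big(\|x^{k+1,T-1}-x^*\|_U^2+\frac{\alpha}{\beta}\|\lambda^k-\lambda^*\|^2\Big).\]
   Context: Setting: $n$ agents are connected by a connected undirected graph with edge set $\mathcal E$, $\epsilon=|\mathcal E|$. For $x\in\mathbb R^n$ let $f(x)=\sum_{i=1}^n f_i(x_i)$, where each $f_i:\mathbb R\to\mathbb R$ is twice differentiable with $m\le f_i''\le L$ for constants $0<m\le L$; $\nabla f(x)=(f_1'(x_1),\dots,f_n'(x_n))'$. $A\in\mathbb R^{\epsilon\times n}$ is the edge–node incidence matrix (null space spanned by the all-ones vector). $B\in\mathbb R^{n\times n}$ is symmetric positive semidefinite with the same null space as $A$, off-diagonal entries nonzero only on edges. $x^*$ is the unique minimizer of $f$ subject to $Ax=0$ and $\lambda^*$ a Lagrange multiplier with $\nabla f(x^* )+A'\lambda^*=0$, $Ax^*=0$, $Bx^*=0$, chosen in the column space of $A$. FlexPD-F: given $\alpha,\beta>0$, $T\ge1$, $x^0$ arbitrary, $\lambda^0=0$; for $k\ge0$: $x^{k+1,0}=x^k$, $x^{k+1,t}=(I-\alpha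 B)x^{k+1,t-1}-\alpha\nabla f(x^{k+1,t-1})-\alpha A'\lambda^k$ for $t=1,\dots,T$, $x^{k+1}=x^{k+1,T}$, $\lambda^{k+1}=\lambda^k+\beta Ax^{k+1}$. Notation: $\rho(S)$ largest eigenvalue of symmetric $S$; $\|v\|_S^2=v'Sv$; $\|\cdot\|$ Euclidean norm. *)

(* Defs.v *)
From HB Require Import structures.
From mathcomp Require Import all_boot all_order all_algebra.
From mathcomp Require Import all_classical all_reals all_analysis.
Set Implicit Arguments. Unset Strict Implicit. Unset Printing Implicit Defensive.
Import Order.TTheory GRing.Theory Num.Theory.
Local Open Scope ring_scope.

Section FlexPD.
Variable R : realType.

(* Graph on nodes 'I_n with eps edges; edge e has endpoints ends e = (i, j), i <> j
   (orientation arbitrary). *)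
Definition edge_adj n eps (ends : 'I_eps -> 'I_n * 'I_n) (i j : 'I_n) : bool :=
  [exists e, (ends e == (i, j)) || (ends e == (j, i))].

Definition simple_graph n eps (ends : 'I_eps -> 'I_n * 'I_n) : Prop :=
  (forall e, (ends e).1 != (ends e).2) /\
  (forall e e', (ends e == ends e') || (ends e == ((ends e').2, (ends e').1)) -> e = e').

Definition graph_connected n eps (ends : 'I_eps -> 'I_n * 'I_n) : Prop :=
  forall i j : 'I_n, connect (edge_adj ends) i j.

Definition incidence n eps (ends : 'I_eps -> 'I_n * 'I_n) : 'M[R]_(eps, n) :=
  \matrix_(e, i) (if i == (ends e).1 then 1 else if i == (ends e).2 then -1 else 0).

Definition Fsum n (f : 'I_n -> R -> R) (x : 'cV[R]_n) : R := \sum_i f i (x i 0).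
Definition gradF n (f : 'I_n -> R -> R) (x : 'cV[R]_n) : 'cV[R]_n :=
  \col_i (derive1 (f i) (x i 0)).

Definition sqnormS n (S : 'M[R]_n) (v : 'cV[R]_n) : R := (v^T *m S *m v) 0 0.
Definition sqnorm m (v : 'cV[R]_m) : R := (v^T *m v) 0 0.

Definition psd n (S : 'M[R]_n) : Prop := forall v : 'cV[R]_n, 0 <= sqnormS S v.

Definition is_largest_eigenvalue n (S : 'M[R]_n) (r : R) : Prop :=
  eigenvalue S r /\ (forall r', eigenvalue S r' -> r' <= r).

Definition inner_step n eps (A : 'M[R]_(eps, n)) (B : 'M[R]_n) (f : 'I_n -> R -> R)
  (alpha : R) (lam : 'cV[R]_eps) (y : 'cV[R]_n) : 'cV[R]_n :=
  (1%:M - alpha *: B) *m y - alpha *: gradF f y - alpha *: (A^T *m lam).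

(* x^{k+1,t} given (x^k, lambda^k) *)
Definition inner_iter n eps (A : 'M[R]_(eps, n)) (B : 'M[R]_n) (f : 'I_n -> R -> R)
  (alpha : R) (t : nat) (xk : 'cV[R]_n) (lamk : 'cV[R]_eps) : 'cV[R]_n :=
  iter t (inner_step A B f alpha lamk) xk.

Fixpoint flexpdF n eps (A : 'M[R]_(eps, n)) (B : 'M[R]_n) (f : 'I_n -> R -> R)
  (alpha beta : R) (T : nat) (x0 : 'cV[R]_n) (k : nat) : 'cV[R]_n * 'cV[R]_eps :=
  match k with
  | 0 => (x0, 0)
  | k'.+1 =>
      let p := flexpdF A B f alpha beta T x0 k' in
      let x' := inner_iter A B f alpha T p.1 p.2 in
      (x', p.2 + beta *: (A *m x'))
  end.

End FlexPD.

(* Main.v *)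
Require Import Defs.
From HB Require Import structures.
From mathcomp Require Import all_boot all_order all_algebra.
From mathcomp Require Import all_classical all_reals all_analysis.
From mathcomp Require Import ring lra.
Import Order.TTheory GRing.Theory Num.Theory.
Local Open Scope ring_scope.

Lemma mvt_comp (R : realType) (F : R -> R) (m L : R) :
  (forall x, derivable F x 1) -> (forall x, derivable (derive1 F) x 1) ->
  (forall x, m <= derive1 (derive1 F) x <= L) ->
  forall a b, exists h, m <= h <= L /\ derive1 F b - derive1 F a = h * (b - a).
Proof.
move=> dF dF' hb.
have key : forall a b, a <= b -> exists h, m <= h <= L /\ derive1 F b - derive1 F a = h * (b - a).
  move=> a b ab.
  have [c _ hc] := @MVT_segment R (derive1 F) (derive1 (derive1 F)) a b ab
    (fun x _ => ltac:(rewrite derive1E; exact: derivableP))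
    (derivable_within_continuous (fun x _ => dF' x)).
  by exists (derive1 (derive1 F) c); split.
move=> a b; case: (lerP a b) => ab; first exact: key.
have [h [hh e]] := key b a (ltW ab); exists h; split => //.
by apply: (can_inj (@opprK _)); rewrite opprB e -mulrN opprB.
Qed.

Set Implicit Arguments. Unset Strict Implicit. Unset Printing Implicit Defensive.

Section Dot.
Variable R : realType.

Definition dot n (u v : 'cV[R]_n) : R := \sum_i u i 0 * v i 0.

Lemma mxdot n (u v : 'cV[R]_n) : (u^T *m v) 0 0 = dot u v.
Proof. by rewrite mxE; apply: eq_bigr => i _; rewrite mxE. Qed.

Lemma sqnormSE n (S : 'M[R]_n) v : sqnormS S v = dot v (S *m v).
Proof. by rewrite /sqnormS -mulmxA mxdot. Qed.

Lemma sqnormE n (v : 'cV[R]_n) : sqnorm v = dot v v.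
Proof. by rewrite /sqnorm mxdot. Qed.

Lemma dotC n (u v : 'cV[R]_n) : dot u v = dot v u.
Proof. by apply: eq_bigr => i _; rewrite mulrC. Qed.

Lemma dotDl n (u v w : 'cV[R]_n) : dot (u + v) w = dot u w + dot v w.
Proof. by rewrite /dot -big_split; apply: eq_bigr => i _; rewrite mxE mulrDl. Qed.

Lemma dotDr n (u v w : 'cV[R]_n) : dot w (u + v) = dot w u + dot w v.
Proof. by rewrite dotC dotDl !(dotC w). Qed.

Lemma dotZl n a (u w : 'cV[R]_n) : dot (a *: u) w = a * dot u w.
Proof. by rewrite /dot mulr_sumr; apply: eq_bigr => i _; rewrite mxE mulrA. Qed.

Lemma dotZr n a (u w : 'cV[R]_n) : dot w (a *: u) = a * dot w u.
Proof. by rewrite dotC dotZl dotC. Qed.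

Lemma dotNl n (u w : 'cV[R]_n) : dot (- u) w = - dot u w.
Proof. by rewrite -scaleN1r dotZl mulN1r. Qed.

Lemma dotNr n (u w : 'cV[R]_n) : dot w (- u) = - dot w u.
Proof. by rewrite dotC dotNl dotC. Qed.

Lemma dotBl n (u v w : 'cV[R]_n) : dot (u - v) w = dot u w - dot v w.
Proof. by rewrite dotDl dotNl. Qed.

Lemma dotBr n (u v w : 'cV[R]_n) : dot w (u - v) = dot w u - dot w v.
Proof. by rewrite dotDr dotNr. Qed.

Lemma dot_mul m n (M : 'M[R]_(m, n)) u v : dot u (M *m v) = dot (M^T *m u) v.
Proof. by rewrite -!mxdot trmx_mul trmxK mulmxA. Qed.

Lemma dot_ge0 n (u : 'cV[R]_n) : 0 <= dot u u.
Proof. by apply: sumr_ge0 => i _; exact: sqr_ge0. Qed.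

Lemma dot_sym n (B : 'M[R]_n) u v : B^T = B -> dot (B *m u) v = dot u (B *m v).
Proof. by move=> hB; rewrite dot_mul hB dotC. Qed.

End Dot.

Section Quad.
Variable R : realType.

Lemma comp_le_dot n (u : 'cV[R]_n) i : u i 0 ^+ 2 <= dot u u.
Proof.
rewrite /dot (bigD1 i) //= -expr2 lerDl; apply: sumr_ge0 => j _; exact: sqr_ge0.
Qed.

Lemma term_bound (x y p S : R) : x ^+ 2 <= S -> y ^+ 2 <= S -> x * (p * y) <= `|p| * S.
Proof.
move=> hx hy.
have h1 : x * (p * y) <= `|p| * `|x * y| by rewrite mulrCA -normrM ler_norm.
have h2 : `|x * y| <= S.
  rewrite normrM.
  have : 2 * (`|x| * `|y|) <= `|x| ^+ 2 + `|y| ^+ 2.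
    have := sqr_ge0 (`|x| - `|y|); rewrite sqrrB; lra.
  rewrite !real_normK ?num_real //; lra.
apply: (le_trans h1); apply: ler_wpM2l => //.
Qed.

Lemma quad_bound n (P : 'M[R]_n) : exists K, 0 < K /\ forall u, dot u (P *m u) <= K * dot u u.
Proof.
exists (1 + \sum_i \sum_j `|P i j|); split.
  have : 0 <= \sum_i \sum_j `|P i j| by apply: sumr_ge0 => i _; apply: sumr_ge0.
  lra.
move=> u.
have h : dot u (P *m u) <= (\sum_i \sum_j `|P i j|) * dot u u.
  rewrite /dot mulr_suml; apply: ler_sum => i _; rewrite mxE mulr_sumr mulr_suml.
  apply: ler_sum => j _; apply: term_bound; exact: comp_le_dot.
apply: (le_trans h); rewrite mulrDl mul1r lerDr; exact: dot_ge0.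
Qed.

End Quad.

Section Ray.
Variable R : realType.

Lemma coercive n (N : 'M[R]_n) : N^T = N -> N \in unitmx ->
  (forall v, 0 <= dot v (N *m v)) ->
  exists K, 0 < K /\ forall u, dot u u <= K * dot u (N *m u).
Proof.
move=> hs hu hp.
have [K [K0 hK]] := quad_bound (invmx N).
exists K; split => // u.
set w := invmx N *m u.
have hNw : N *m w = u by rewrite /w mulmxA mulmxV // mul1mx.
have hc : dot w (N *m w) <= K * dot u u by rewrite hNw dotC; exact: hK.
have h1 := hp (u - K^-1 *: w).
rewrite mulmxBr -scalemxAr dotBl !dotBr !dotZl !dotZr in h1.
have f1 : dot (N *m u) u = dot u (N *m u) := dotC _ _.
have f2 : dot w (N *m u) = dot u u by rewrite -(dot_sym _ _ hs) hNw.
have f3 : dot u w = dot w (N *m w) by rewrite hNw dotC.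
have f4 : dot w u = dot w (N *m w) by rewrite hNw.
rewrite f2 hNw in h1; rewrite (dotC w u) f3 in h1.
set a := dot u (N *m u) in h1 *; set b := dot u u in h1 hc *.
set c := dot w (N *m w) in h1 hc.
set t := K^-1 in h1.
have hb : 0 <= b by exact: dot_ge0.
have hKt : K * t = 1 by rewrite /t divff // gt_eqF.
have ht : 0 < t by rewrite /t invr_gt0.
have e : K * (a - t * b - t * (b - t * c)) = K * a - 2 * b + t * c.
  have -> : K * (a - t * b - t * (b - t * c)) = K * a - 2 * (K * t) * b + (K * t) * t * c by ring.
  by rewrite hKt; ring.
have h2 : 0 <= K * a - 2 * b + t * c.
  rewrite -e; apply: mulr_ge0; [exact: ltW|]. move: h1. by rewrite opprB [t * (b - _)]mulrBr opprB.
have h3 : t * c <= b.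
  have : t * c <= t * (K * b) by rewrite ler_wpM2l // ltW.
  by rewrite mulrA [t * K]mulrC hKt mul1r.
lra.
Qed.

Lemma rayleigh n (M : 'M[R]_n) (r : R) : (0 < n)%N -> M^T = M ->
  (forall a, eigenvalue M a -> a <= r) ->
  forall u, dot u (M *m u) <= r * dot u u.
Proof.
move=> n0 hs hr.
pose E := [set t : R | forall u, dot u (M *m u) <= t * dot u u]%classic.
have [K0 [K00 hK0]] := quad_bound M.
have [K1 [K10 hK1]] := quad_bound (- M).
have E0 : E K0 by move=> u; exact: hK0.
pose u0 : 'cV[R]_n := const_mx 1.
have hu0 : 0 < dot u0 u0.
  rewrite /dot (bigD1 (Ordinal n0)) //= !mxE mulr1.
  apply: (@lt_le_trans _ _ 1) => //; rewrite lerDl.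
  by apply: sumr_ge0 => i _; rewrite !mxE mulr1.
have Elb : lbound E (- K1).
  move=> t Et; have h1 := Et u0; have h2 := hK1 u0.
  rewrite mulNmx dotNr in h2.
  have : (- K1) * dot u0 u0 <= t * dot u0 u0 by rewrite mulNr; lra.
  by rewrite ler_pM2r.
have hinf : has_inf E by split; [exists K0 | exists (- K1)].
set s := inf E.
have Es : E s.
  move=> u; have hb := dot_ge0 u.
  apply/ler_addgt0Pr => e e0.
  have ee : 0 < e / (dot u u + 1) by rewrite divr_gt0 // ltr_pwDr.
  have [t Et ht] := inf_adherent ee hinf.
  apply: (le_trans (Et u)).
  have : t * dot u u <= (s + e / (dot u u + 1)) * dot u u by rewrite ler_wpM2r // ltW.
  move=> /le_trans; apply.
  rewrite mulrDl lerD2l mulrAC ler_pdivrMr ?ltr_pwDr //; nra.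
have eig : eigenvalue M s.
  case: (boolP (eigenvalue M s)) => // hne; exfalso.
  have hunit : (s%:M - M) \in unitmx.
    move: hne; rewrite /eigenvalue /eigenspace negbK => /eqP h.
    have -> : s%:M - M = (-1) *: (M - s%:M) by rewrite scaleN1r opprB.
    rewrite unitmxZ ?unitrN1 // -row_free_unit -kermx_eq0.
    by rewrite h.
  have hNs : (s%:M - M)^T = s%:M - M by rewrite raddfB /= tr_scalar_mx hs.
  have hNv : forall v, dot v ((s%:M - M) *m v) = s * dot v v - dot v (M *m v).
    by move=> v; rewrite mulmxBl mul_scalar_mx dotBr dotZr.
  have hNp : forall v, 0 <= dot v ((s%:M - M) *m v).
    by move=> v; rewrite hNv subr_ge0; exact: Es.
  have [K [Kp hK]] := coercive hNs hunit hNp.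
  have Es' : E (s - K^-1).
    move=> u; have := hK u; rewrite hNv => h.
    have hb := dot_ge0 u.
    rewrite mulrBl lerBrDr -lerBrDl.
    rewrite ler_pdivrMl //.
  have := ge_inf (ex_intro _ _ Elb) Es'.
  rewrite -/s => h; have : 0 < K^-1 by rewrite invr_gt0.
  lra.
have := hr s eig => hsr u.
apply: (le_trans (Es u)); apply: ler_wpM2r => //; exact: dot_ge0.
Qed.

End Ray.

Section Col.
Variable R : realType.

Lemma trmx_mul_eq0 e n (X : 'M[R]_(e, n)) : X^T *m X = 0 -> X = 0.
Proof.
move=> h; apply/matrixP => i j; rewrite mxE.
have := congr1 (fun (Y : 'M[R]_n) => Y j j) h; rewrite !mxE => /eqP.
rewrite psumr_eq0 => [/allP /(_ i (mem_index_enum _))|k _].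
  by rewrite mxE -expr2 sqrf_eq0 => /eqP.
by rewrite mxE -expr2 sqr_ge0.
Qed.

Lemma norm_bound m n (M : 'M[R]_(m, n)) : exists K, 0 < K /\
  forall v, dot (M *m v) (M *m v) <= K * dot v v.
Proof.
have [K [K0 hK]] := quad_bound (M^T *m M).
by exists K; split => // v; rewrite dot_mul dotC mulmxA; exact: hK.
Qed.

Lemma col_bound e n (A : 'M[R]_(e, n)) : exists K, 0 < K /\
  forall z, dot (A *m z) (A *m z) <= K * dot (A^T *m (A *m z)) (A^T *m (A *m z)).
Proof.
have hsub : (A <= A^T *m A)%MS.
  rewrite submxE; apply/eqP; apply: trmx_mul_eq0.
  by rewrite trmx_mul mulmxA -(mulmxA _ A^T A) -mulmxA mulmx_coker mulmx0.
have [D hD] := submxP hsub.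
have [K [K0 hK]] := norm_bound D.
exists K; split => // z.
by rewrite {1 2}hD -!mulmxA hK.
Qed.

Lemma dot_add2 n (u v : 'cV[R]_n) : dot (u + v) (u + v) <= 2 * (dot u u + dot v v).
Proof.
rewrite /dot -big_split mulr_sumr /=; apply: ler_sum => i _; rewrite !mxE.
have := sqr_ge0 (u i 0 - v i 0); rewrite sqrrB => h.
rewrite -!expr2 sqrrD; lra.
Qed.

Lemma dot_add4 n (u v w x : 'cV[R]_n) :
  dot (u + v + w + x) (u + v + w + x) <= 4 * (dot u u + dot v v + dot w w + dot x x).
Proof.
rewrite /dot -!big_split mulr_sumr /=; apply: ler_sum => i _; rewrite !mxE.
rewrite -!expr2.
set a := u i 0; set b := v i 0; set c := w i 0; set d := x i 0.
have := sqr_ge0 (a - b); have := sqr_ge0 (a - c); have := sqr_ge0 (a - d).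
have := sqr_ge0 (b - c); have := sqr_ge0 (b - d); have := sqr_ge0 (c - d).
rewrite !sqrrB !sqrrD; lra.
Qed.

End Col.

Section G.
Variable R : realType.

Lemma comp_gp (h p d m L eta : R) : 0 < m -> m <= h <= L -> 0 < eta ->
  (2 * m - eta) * p ^+ 2 - L ^+ 2 / eta * d ^+ 2 <= 2 * ((h * (p + d)) * p).
Proof.
move=> m0 /andP[mh hL] e0.
set k := L ^+ 2 / eta.
have hk : k * eta = L ^+ 2 by rewrite /k divfK // gt_eqF.
have hh : h ^+ 2 <= L ^+ 2 by rewrite ler_sqr ?nnegrE; lra.
have h1 : 0 <= eta * (2 * h * d * p + k * d ^+ 2 + eta * p ^+ 2).
  have := sqr_ge0 (h * d + eta * p).
  have : h ^+ 2 * d ^+ 2 <= L ^+ 2 * d ^+ 2 by rewrite ler_wpM2r ?sqr_ge0.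
  rewrite -hk; move=> a b; nra.
have h2 : 0 <= 2 * h * d * p + k * d ^+ 2 + eta * p ^+ 2.
  by move: h1; rewrite pmulr_rge0.
have h3 : m * p ^+ 2 <= h * p ^+ 2 by rewrite ler_wpM2r ?sqr_ge0.
nra.
Qed.

Lemma gp_bound n (e p g : 'cV[R]_n) (m L eta : R) : 0 < m -> 0 < eta ->
  (forall i, exists h, m <= h <= L /\ g i 0 = h * e i 0) ->
  (2 * m - eta) * dot p p - L ^+ 2 / eta * dot (e - p) (e - p) <= 2 * dot g p.
Proof.
move=> m0 e0 hg; rewrite /dot !mulr_sumr -sumrB; apply: ler_sum => i _.
have [h [hh ->]] := hg i; rewrite !mxE -!expr2.
have -> : e i 0 = p i 0 + (e i 0 - p i 0) by ring.
have := comp_gp (p i 0) (e i 0 - p i 0) m0 hh e0.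
by rewrite !addrA [p i 0 + e i 0]addrC addrK.
Qed.

Lemma gg_bound n (e g : 'cV[R]_n) (m L : R) : 0 < m ->
  (forall i, exists h, m <= h <= L /\ g i 0 = h * e i 0) ->
  dot g g <= L ^+ 2 * dot e e.
Proof.
move=> m0 hg; rewrite /dot !mulr_sumr; apply: ler_sum => i _.
have [h [/andP[mh hL] ->]] := hg i.
have hh : h ^+ 2 <= L ^+ 2 by rewrite ler_sqr ?nnegrE; lra.
have := sqr_ge0 (e i 0); have : h ^+ 2 * e i 0 ^+ 2 <= L ^+ 2 * e i 0 ^+ 2 by rewrite ler_wpM2r ?sqr_ge0.
rewrite !expr2; nra.
Qed.

End G.

Section Core.
Variable R : realType.

Lemma core n e (A : 'M[R]_(e, n)) (B : 'M[R]_n) (m L al be eta rB rA : R) :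
  B^T = B -> (forall v, 0 <= dot v (B *m v)) -> 0 < m -> m <= L -> 0 < eta ->
  0 < al -> al * (L ^+ 2 / eta + rB) < 1 -> 0 < be -> be * rA < 2 * m - eta ->
  (forall u, dot u (B *m u) <= rB * dot u u) ->
  (forall u, dot (A *m u) (A *m u) <= rA * dot u u) ->
  exists dl, 0 < dl /\ forall (ee pp g : 'cV[R]_n) (mu : 'cV[R]_e) (z : 'cV[R]_n),
    mu = A *m z ->
    pp = ee - al *: (B *m ee) - al *: g - al *: (A^T *m mu) ->
    (forall i, exists h, m <= h <= L /\ g i 0 = h * ee i 0) ->
    dot pp (pp - al *: (B *m pp)) + al / be * dot (mu + be *: (A *m pp)) (mu + be *: (A *m pp))
    <= 1 / (1 + dl) * (dot ee (ee - al *: (B *m ee)) + al / be * dot mu mu).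
Proof.
move=> hBs hBp m0 mL e0 a0 ha b0 hb hrB hrA.
have [Kc [Kc0 hKc]] := col_bound A.
have [KB [KB0 hKB]] := norm_bound B.
have [KA [KA0 hKA]] := norm_bound (A^T *m A).
set k := L ^+ 2 / eta.
have k0 : 0 <= k by rewrite /k divr_ge0 ?sqr_ge0 // ltW.
set c1 := 1 - al * (k + rB).
set c3 := al * (2 * m - eta - be * rA).
have c10 : 0 < c1 by rewrite /c1 /k; lra.
have c30 : 0 < c3 by rewrite /c3 mulr_gt0 //; lra.
set cm := Num.min c1 c3.
have cm0 : 0 < cm by rewrite /cm lt_min c10 c30.
have cm1 : cm <= c1 by rewrite /cm ge_min lexx.
have cm3 : cm <= c3 by rewrite /cm ge_min lexx orbT.
set C := 4 + 8 * al ^+ 2 * (KB + L ^+ 2) + 4 * al ^+ 2 * be ^+ 2 * KA.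
have C0 : 0 < C.
  rewrite /C; have h1 := sqr_ge0 al; have h2 := sqr_ge0 be; have h3 := sqr_ge0 L.
  have h4 : 0 <= al ^+ 2 * be ^+ 2 * KA by rewrite !mulr_ge0 // ltW.
  have h5 : 0 <= al ^+ 2 * (KB + L ^+ 2) by rewrite mulr_ge0 // addr_ge0 // ltW.
  lra.
set Kt := 1 + Kc * C / (al * be).
have Kt0 : 0 < Kt by rewrite /Kt ltr_pwDl // divr_ge0 ?mulr_ge0 // ltW // mulr_gt0.
exists (cm / Kt); split; first by rewrite divr_gt0.
move=> ee pp g mu z hmu hp hg.
set d := ee - pp.
have hed : ee = pp + d by rewrite /d addrC subrK.
have hAmu : al *: (A^T *m mu) = d - al *: (B *m ee) - al *: g.
  by apply/matrixP => i j; rewrite /d hp !mxE; ring.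
have hde : ee - pp = d by [].
clearbody d.
set mup := mu + be *: (A *m pp).
have hmup : mup = A *m (z + be *: pp) by rewrite /mup hmu mulmxDr scalemxAr.
have hcol : dot mup mup <= Kc * dot (A^T *m mup) (A^T *m mup) by rewrite hmup; exact: hKc.
have hw : al *: (A^T *m mup) = d + (- al) *: (B *m ee) + (- al) *: g + (al * be) *: ((A^T *m A) *m pp).
  by rewrite /mup mulmxDr scalerDr hAmu -scalemxAr -mulmxA scalerA !scaleNr.
set X := dot (A^T *m mup) (A^T *m mup).
set P := dot pp pp; set Dd := dot d d; set E := dot ee ee.
have hP : 0 <= P by exact: dot_ge0.
have hD : 0 <= Dd by exact: dot_ge0.
have hX0 : 0 <= X by exact: dot_ge0.
have hX : al ^+ 2 * X <= 4 * (Dd + al ^+ 2 * dot (B *m ee) (B *m ee) + al ^+ 2 * dot g g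
             + (al * be) ^+ 2 * dot ((A^T *m A) *m pp) ((A^T *m A) *m pp)).
  have := dot_add4 d ((- al) *: (B *m ee)) ((- al) *: g) ((al * be) *: ((A^T *m A) *m pp)).
  rewrite -hw !dotZl !dotZr !mulrA -!expr2 sqrrN => h.
  by move: h; rewrite -/X -/Dd !expr2 !mulrA.
have t1 : al ^+ 2 * dot (B *m ee) (B *m ee) <= al ^+ 2 * (KB * E) by rewrite ler_wpM2l ?sqr_ge0.
have t2 : al ^+ 2 * dot g g <= al ^+ 2 * (L ^+ 2 * E) by rewrite ler_wpM2l ?sqr_ge0 // (gg_bound m0 hg).
have t3 : (al * be) ^+ 2 * dot ((A^T *m A) *m pp) ((A^T *m A) *m pp) <= (al * be) ^+ 2 * (KA * P)
  by rewrite ler_wpM2l ?sqr_ge0.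
have hE : E <= 2 * (P + Dd) by rewrite /E hed; exact: dot_add2.
have t4 : al ^+ 2 * (KB + L ^+ 2) * E <= al ^+ 2 * (KB + L ^+ 2) * (2 * (P + Dd)).
  by rewrite ler_wpM2l // mulr_ge0 ?sqr_ge0 // addr_ge0 ?sqr_ge0 // ltW.
have t5 : 0 <= al ^+ 2 * be ^+ 2 * KA * Dd by rewrite !mulr_ge0 ?sqr_ge0 // ltW.
have hXC : al ^+ 2 * X <= C * (P + Dd).
  rewrite /C; move: hX t1 t2 t3 t4 t5; rewrite exprMn; lra.
set pBp := dot pp (B *m pp).
have hpBp : 0 <= pBp by exact: hBp.
have apBp : 0 <= al * pBp by rewrite mulr_ge0 // ltW.
have E1 : dot pp (pp - al *: (B *m pp)) = P - al * pBp by rewrite dotBr dotZr.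
have ab0 : 0 < al * be by rewrite mulr_gt0.
have hmX : al / be * dot mup mup <= Kc / (al * be) * (C * (P + Dd)).
  have h1 : al / be * dot mup mup <= al / be * (Kc * X) by rewrite ler_wpM2l // divr_ge0 // ltW.
  have h2 : al / be * (Kc * X) = Kc / (al * be) * (al ^+ 2 * X).
    by field; rewrite !gt_eqF.
  apply: (le_trans h1); rewrite h2 ler_wpM2l //.
  by rewrite divr_ge0 // ltW.
have hS : dot pp (pp - al *: (B *m pp)) + al / be * dot mup mup <= Kt * (P + Dd).
  rewrite E1 /Kt mulrDl mul1r.
  have e1 : Kc * C / (al * be) * (P + Dd) = Kc / (al * be) * (C * (P + Dd)) by ring.
  lra.
set q := dot d (B *m pp); set dBd := dot d (B *m d); set dp := dot d pp.
set gp := dot g pp; set mm := dot mu mu; set mAp := dot mu (A *m pp).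
set ApAp := dot (A *m pp) (A *m pp).
have E2 : dot mup mup = mm + 2 * be * mAp + be ^+ 2 * ApAp.
  rewrite /mup dotDl !dotDr !dotZl !dotZr (dotC (A *m pp) mu) -/mm -/mAp -/ApAp; ring.
have E3 : al * mAp = dp - al * (pBp + q) - al * gp.
  rewrite /mAp dot_mul -dotZl hAmu !dotBl !dotZl hed mulmxDr dotDl.
  rewrite (dotC (B *m pp)) (dot_sym d pp hBs) -/pBp -/q -/gp -/dp; ring.
have E4 : dot ee (ee - al *: (B *m ee)) = P + 2 * dp + Dd - al * (pBp + 2 * q + dBd).
  rewrite hed dotBr !dotDl !dotDr !dotZr mulmxDr !dotDr.
  rewrite (dotC pp d) -(dot_sym pp d hBs) (dotC (B *m pp) d) -/pBp -/q -/dBd -/dp -/P -/Dd.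
  ring.
have I1 : (2 * m - eta) * P - k * Dd <= 2 * gp.
  have := gp_bound pp m0 e0 hg; rewrite hde.
  done.
have I2 : dBd <= rB * Dd by exact: hrB.
have I4 : ApAp <= rA * P by exact: hrA.
have J1 : al * ((2 * m - eta) * P - k * Dd) <= al * (2 * gp) by rewrite ler_wpM2l // ltW.
have J2 : al * dBd <= al * (rB * Dd) by rewrite ler_wpM2l // ltW.
have J4 : al * be * ApAp <= al * be * (rA * P) by rewrite ler_wpM2l // ltW.
have E5 : al / be * (mm + 2 * be * mAp + be ^+ 2 * ApAp) = al / be * mm + 2 * (al * mAp) + al * be * ApAp.
  by field; rewrite gt_eqF.
have Jm1 : cm * Dd <= c1 * Dd by rewrite ler_wpM2r.
have Jm3 : cm * P <= c3 * P by rewrite ler_wpM2r.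
set S := dot pp (pp - al *: (B *m pp)) + al / be * dot mup mup.
set R0 := dot ee (ee - al *: (B *m ee)) + al / be * dot mu mu.
have hgap : S + cm * (P + Dd) <= R0.
  rewrite /S /R0 E1 E2 E5 E3 E4 -/mm.
  move: Jm1 Jm3 J1 J2 J4; rewrite /c1 /c3; lra.
have hdS : cm / Kt * S <= cm * (P + Dd).
  have : cm / Kt * S <= cm / Kt * (Kt * (P + Dd)) by rewrite ler_wpM2l // divr_ge0 // ltW.
  by rewrite mulrA divfK // gt_eqF.
have hd0 : 0 < 1 + cm / Kt by rewrite ltr_pwDl // divr_ge0 // ltW.
rewrite div1r ler_pdivlMl //; lra.
Qed.
End Core.

Unset Implicit Arguments. Set Strict Implicit. Set Printing Implicit Defensive.

Theorem theorem3p6 (R : realType) (n eps : nat) (ends : 'I_eps -> 'I_n * 'I_n)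
  (B : 'M[R]_n) (f : 'I_n -> R -> R) (m L : R)
  (xs : 'cV[R]_n) (lams : 'cV[R]_eps)
  (alpha beta eta1 rhoB rhoAA : R) (T : nat) (x0 : 'cV[R]_n) :
  (0 < n)%N ->
  simple_graph ends -> graph_connected ends ->
  B^T = B -> psd B ->
  (forall v : 'cV[R]_n, B *m v = 0 <-> incidence R ends *m v = 0) ->
  (forall i j : 'I_n, i != j -> B i j != 0 -> edge_adj ends i j) ->
  0 < m -> m <= L ->
  (forall i x, derivable (f i) x 1 /\ derivable (derive1 (f i)) x 1) ->
  (forall i x, m <= derive1 (derive1 (f i)) x <= L) ->
  (* x* minimizes f subject to A x = 0 *)
  incidence R ends *m xs = 0 ->
  (forall y : 'cV[R]_n, incidence R ends *m y = 0 -> Fsum f xs <= Fsum f y) ->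
  (* lambda* : KKT multiplier in the column space of A *)
  gradF f xs + (incidence R ends)^T *m lams = 0 ->
  (exists z : 'cV[R]_n, lams = incidence R ends *m z) ->
  is_largest_eigenvalue B rhoB ->
  is_largest_eigenvalue ((incidence R ends)^T *m incidence R ends) rhoAA ->
  (1 <= T)%N ->
  0 < eta1 -> eta1 < 2 * m ->
  0 < alpha -> alpha < 1 / (L ^+ 2 / eta1 + rhoB) ->
  0 < beta -> beta * rhoAA < 2 * m - eta1 ->
  exists deltaF : R, 0 < deltaF /\
    forall k : nat,
      let U := 1%:M - alpha *: B in
      let p := flexpdF (incidence R ends) B f alpha beta T x0 k in
      let q := flexpdF (incidence R ends) B f alpha beta T x0 k.+1 in
      sqnormS U (inner_iter (incidence R ends) B f alpha T p.1 p.2 - xs)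
        + alpha / beta * sqnorm (q.2 - lams)
      <= 1 / (1 + deltaF) *
         (sqnormS U (inner_iter (incidence R ends) B f alpha T.-1 p.1 p.2 - xs)
          + alpha / beta * sqnorm (p.2 - lams)).
Proof.
move=> n0 _ _ hBs hBpsd hnull _ m0 mL hder hbnd hAxs _ hkkt [zs hzs] [_ hrB] [_ hrA] hT1
  e0 _ a0 ha b0 hb.
set A := incidence R ends.
rewrite -/A in hAxs hkkt hzs hnull hrA.
have hBxs : B *m xs = 0 by apply/hnull.
have hBp : forall v, 0 <= dot v (B *m v) by move=> v; rewrite -sqnormSE; exact: hBpsd.
have hrB' := rayleigh n0 hBs hrB.
have hAAs : (A^T *m A)^T = A^T *m A by rewrite trmx_mul trmxK.
have hrA0 := rayleigh n0 hAAs hrA.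
have hrA' : forall u, dot (A *m u) (A *m u) <= rhoAA * dot u u.
  by move=> u; rewrite dot_mul dotC mulmxA; exact: hrA0.
have ha' : alpha * (L ^+ 2 / eta1 + rhoB) < 1.
  case: (lerP (L ^+ 2 / eta1 + rhoB) 0) => hX.
    have : 1 / (L ^+ 2 / eta1 + rhoB) <= 0 by rewrite div1r invr_le0.
    lra.
  by rewrite -ltr_pdivlMr // mulrC.
have [dl [dl0 hcore]] := core hBs hBp m0 mL e0 a0 ha' b0 hb hrB' hrA'.
have lamcol : forall k, exists z, (flexpdF A B f alpha beta T x0 k).2 = A *m z.
  elim=> [|k [z hz]]; first by exists 0; rewrite mulmx0.
  exists (z + beta *: inner_iter A B f alpha T (flexpdF A B f alpha beta T x0 k).1
                            (flexpdF A B f alpha beta T x0 k).2).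
  by rewrite /= hz mulmxDr scalemxAr.
exists dl; split => // k.
have [zk hzk] := lamcol k.
cbv zeta.
set p := flexpdF A B f alpha beta T x0 k.
have hq2 : (flexpdF A B f alpha beta T x0 k.+1).2 = p.2 + beta *: (A *m inner_iter A B f alpha T p.1 p.2) by [].
rewrite hq2.
set y := inner_iter A B f alpha T.-1 p.1 p.2.
have hx : inner_iter A B f alpha T p.1 p.2 = inner_step A B f alpha p.2 y.
  by rewrite /y /inner_iter; case: (T) hT1.
rewrite hx.
set x := inner_step A B f alpha p.2 y.
have hU : forall v : 'cV[R]_n, (1%:M - alpha *: B) *m v = v - alpha *: (B *m v).
  by move=> v; rewrite mulmxBl mul1mx scalemxAl.
have hmu : p.2 + beta *: (A *m x) - lams = (p.2 - lams) + beta *: (A *m (x - xs)).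
  by rewrite [A *m (x - xs)]mulmxBr hAxs subr0 addrAC.
rewrite !sqnormSE !sqnormE !hU hmu.
have hgs : gradF f xs = - (A^T *m lams) by apply/eqP; rewrite -addr_eq0 hkkt.
apply: (hcore (y - xs) (x - xs) (gradF f y - gradF f xs) (p.2 - lams) (zk - zs)).
- by rewrite mulmxBr -hzk -hzs.
- rewrite /x /inner_step hU hgs !mulmxBr hBxs.
  by apply/matrixP => i j; rewrite !mxE; ring.
- move=> i; rewrite !mxE.
  have [h [hh he]] := @mvt_comp R (f i) m L (fun x => proj1 (hder i x)) (fun x => proj2 (hder i x)) (hbnd i) (xs i 0) (y i 0).
  by exists h; split.
Qed.
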